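(* Let $g$ be a real-valued function on the primes with $0\le g(p)\le\beta$ for all primes $p$, for some constant $\beta$. Assume that for some $c>0$ and each $\varepsilon$ with $0<\varepsilon<1$, \[ \liminf_{x\to\infty}(\varepsilon\log x)^{-1}\sum_{x^{1-\varepsilon}<p\le x}p^{-1}g(p)\log p\ \ge\ c . \] Then for each $\alpha$ with $0<\alpha<c$ there is a subsequence of the primes, whose members are denoted $r$, such that \[ \lim_{x\to\infty}(\log x)^{-1}\sum_{r\le x} r^{-1}g(r)\log r=\alpha . \]
   Context: Sums indexed by $p$ run over primes; the sum over $r\le x$ runs over the members of the chosen subsequence of primes not exceeding $x$. *)

(* Defs.v *)
From Stdlib Require Import Reals ZArith Znumtheory Lra ClassicalEpsilon.
Open Scope R_scope.

Definition isprime (n : nat) : Prop := prime (Z.of_nat n).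

(* floor of a real, as a nat (0 for negative reals) *)
Definition nfloor (x : R) : nat := Z.to_nat (Int_part x).

Definition psum (P : nat -> Prop) (f : nat -> R) (x : R) : R :=
  sum_f_R0 (fun n => match excluded_middle_informative (P n) with
                     | left _ => f n | right _ => 0 end) (nfloor x).

Definition term (g : nat -> R) (n : nat) : R := g n * ln (INR n) / INR n.

(* Main.v *)
Require Import Defs.
From Stdlib Require Import Reals ZArith Znumtheory Lra Lia ClassicalEpsilon.
Open Scope R_scope.

Lemma my_ln_le x y : 0 < x -> x <= y -> ln x <= ln y.
Proof. intros Hx Hxy. destruct (Rle_lt_or_eq_dec _ _ Hxy) as [H|H].
  left; apply ln_increasing; auto. subst; lra. Qed.

Lemma ln_le_inv x y : 0 < x -> ln x <= ln y -> 0 < y -> x <= y.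
Proof. intros Hx H Hy. destruct (Rle_lt_dec x y) as [|H']; auto.
  pose proof (ln_increasing _ _ Hy H'). lra. Qed.

Lemma Int_part_nonneg x : 0 <= x -> (0 <= Int_part x)%Z.
Proof. intros Hx. destruct (base_Int_part x) as [H1 H2].
  assert (IZR (-1) < IZR (Int_part x)) by (simpl; lra).
  apply lt_IZR in H. lia. Qed.

Lemma nfloor_le x : 0 <= x -> INR (nfloor x) <= x.
Proof. intros Hx. unfold nfloor. rewrite INR_IZR_INZ, Z2Nat.id by (apply Int_part_nonneg; auto).
  apply base_Int_part. Qed.

Lemma nfloor_gt x : 0 <= x -> x < INR (nfloor x) + 1.
Proof. intros Hx. unfold nfloor. rewrite INR_IZR_INZ, Z2Nat.id by (apply Int_part_nonneg; auto).
  destruct (base_Int_part x). lra. Qed.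

Lemma nfloor_ge n x : 0 <= x -> INR n <= x -> (n <= nfloor x)%nat.
Proof. intros Hx H. pose proof (nfloor_gt x Hx).
  assert (INR n < INR (nfloor x + 1)) by (rewrite plus_INR; simpl; lra).
  apply INR_lt in H1. lia. Qed.

Lemma nfloor_mono x y : 0 <= x -> x <= y -> (nfloor x <= nfloor y)%nat.
Proof. intros Hx Hxy. apply nfloor_ge. lra. pose proof (nfloor_le x Hx). lra. Qed.

Lemma isprime_ge2 p : isprime p -> (2 <= p)%nat.
Proof. unfold isprime. intros H. apply prime_ge_2 in H. lia. Qed.

Lemma term_nonneg g p : (forall p, isprime p -> 0 <= g p) -> isprime p -> 0 <= term g p.
Proof. intros hg Hp. pose proof (isprime_ge2 p Hp). unfold term.
  assert (2 <= INR p) by (replace 2 with (INR 2) by (simpl; lra); apply le_INR; auto).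
  assert (0 <= ln (INR p)) by (rewrite <- ln_1; apply my_ln_le; lra).
  unfold Rdiv. apply Rmult_le_pos. apply Rmult_le_pos; auto.
  left; apply Rinv_0_lt_compat; lra. Qed.

Lemma term_le g beta p : (forall p, isprime p -> 0 <= g p <= beta) -> isprime p -> term g p <= beta.
Proof. intros hg Hp. pose proof (isprime_ge2 p Hp). unfold term.
  assert (2 <= INR p) by (replace 2 with (INR 2) by (simpl; lra); apply le_INR; auto).
  assert (0 <= ln (INR p)) by (rewrite <- ln_1; apply my_ln_le; lra).
  assert (ln (INR p) < INR p).
  { destruct (Req_dec (ln (INR p)) 0) as [E|E]. lra.
    pose proof (exp_ineq1 _ E). rewrite exp_ln in H2 by lra. lra. }
  set (a := ln (INR p) / INR p).
  assert (0 <= a <= 1). { unfold a. split. unfold Rdiv; apply Rmult_le_pos; auto.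
    left; apply Rinv_0_lt_compat; lra.
    apply (Rmult_le_reg_r (INR p)). lra. unfold Rdiv; rewrite Rmult_assoc, Rinv_l by lra. lra. }
  replace (g p * ln (INR p) / INR p) with (g p * a) by (unfold a, Rdiv; ring).
  destruct (hg p Hp). nra. Qed.

Fixpoint Fs (g : nat -> R) (alpha : R) (n : nat) : R :=
  match n with
  | O => 0
  | S m => Fs g alpha m +
      (if excluded_middle_informative (isprime (S m) /\ Fs g alpha m < alpha * ln (INR (S m)))
       then term g (S m) else 0)
  end.

Definition Ssel (g : nat -> R) (alpha : R) (p : nat) : Prop :=
  match p with O => False | S m => isprime (S m) /\ Fs g alpha m < alpha * ln (INR (S m)) end.

Lemma psum_Fs g alpha x : psum (Ssel g alpha) (term g) x = Fs g alpha (nfloor x).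
Proof. unfold psum. generalize (nfloor x). induction n.
  - simpl. destruct (excluded_middle_informative False); [contradiction|reflexivity].
  - simpl sum_f_R0. rewrite IHn. reflexivity. Qed.

Lemma Fs_step g alpha m : (forall p, isprime p -> 0 <= g p) -> Fs g alpha m <= Fs g alpha (S m).
Proof. intros hg. simpl. destruct excluded_middle_informative as [[Hp _]|]; [|lra].
  pose proof (term_nonneg g _ hg Hp). lra. Qed.

Lemma Fs_mono g alpha m n : (forall p, isprime p -> 0 <= g p) -> (m <= n)%nat -> Fs g alpha m <= Fs g alpha n.
Proof. intros hg H. induction H. lra. pose proof (Fs_step g alpha m0 hg). lra. Qed.

Lemma Fs_nonneg g alpha n : (forall p, isprime p -> 0 <= g p) -> 0 <= Fs g alpha n.
Proof. intros hg. apply (Fs_mono g alpha 0 n hg). lia. Qed.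

Lemma Fs_upper g alpha beta : 0 < alpha -> 0 <= beta ->
  (forall p, isprime p -> 0 <= g p <= beta) ->
  forall n, (1 <= n)%nat -> Fs g alpha n <= alpha * ln (INR n) + beta.
Proof. intros ha hb hg. induction n; intros Hn. lia.
  simpl Fs. destruct excluded_middle_informative as [[Hp Hl]|Hn'].
  - change (Fs g alpha n < alpha * ln (INR (S n))) in Hl. pose proof (term_le g beta _ hg Hp). lra.
  - destruct n. simpl. rewrite ln_1. lra.
    assert (ln (INR (S n)) <= ln (INR (S (S n)))).
    { apply my_ln_le. apply lt_0_INR; lia. apply le_INR; lia. }
    assert (Fs g alpha (S n) <= alpha * ln (INR (S n)) + beta) by (apply IHn; lia).
    nra. Qed.

Lemma sum_lower g alpha (hg : forall p, isprime p -> 0 <= g p) (P : nat -> Prop) M :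
  forall N, (M <= N)%nat ->
  (forall n, (n <= M)%nat -> ~ P n) ->
  (forall n, (M < n <= N)%nat -> P n -> Ssel g alpha n) ->
  Fs g alpha M + sum_f_R0 (fun n => match excluded_middle_informative (P n) with
                     | left _ => term g n | right _ => 0 end) N <= Fs g alpha N.
Proof. intros N. induction N; intros HMN H1 H2.
  - assert (M = 0%nat) by lia. subst. simpl.
    destruct excluded_middle_informative as [HP|]. exfalso; apply (H1 0%nat); auto. lra.
  - destruct (Nat.eq_dec M (S N)) as [E|E].
    + subst. rewrite sum_eq_R0. lra. intros n Hn.
      destruct excluded_middle_informative as [HP|]; auto. exfalso; apply (H1 n); auto.
    + assert (IH : Fs g alpha M + sum_f_R0 (fun n => match excluded_middle_informative (P n) with
                     | left _ => term g n | right _ => 0 end) N <= Fs g alpha N).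
      { apply IHN; auto. lia. intros n Hn HP. apply H2; auto. lia. }
      simpl sum_f_R0. simpl Fs.
      destruct (excluded_middle_informative (P (S N))) as [HP|HP].
      * assert (Hs : Ssel g alpha (S N)) by (apply H2; auto; lia).
        destruct excluded_middle_informative as [|Hn]; [lra|contradiction].
      * destruct excluded_middle_informative as [[Hp _]|]; [|lra].
        pose proof (term_nonneg g _ hg Hp). lra.
Qed.

Lemma pow_le1 a n : 0 <= a <= 1 -> 0 <= a ^ n <= 1.
Proof. intros Ha. induction n; simpl. lra. nra. Qed.

Theorem lemma5 (g : nat -> R) (beta c : R)
  (hg : forall p, isprime p -> 0 <= g p <= beta)
  (hc : 0 < c)
  (hliminf : forall eps, 0 < eps < 1 ->
     forall eta, 0 < eta -> exists X, forall x, X <= x ->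
       c - eta <= / (eps * ln x) *
         psum (fun p => isprime p /\ Rpower x (1 - eps) < INR p) (term g) x) :
  forall alpha, 0 < alpha < c ->
    exists S : nat -> Prop, (forall r, S r -> isprime r) /\
      forall eta, 0 < eta -> exists X, forall x, X <= x ->
        Rabs (/ ln x * psum S (term g) x - alpha) < eta.
Proof.
  intros alpha [ha hac].
  assert (hg0 : forall p, isprime p -> 0 <= g p) by (intros p Hp; apply hg; auto).
  assert (hb : 0 <= beta).
  { assert (H2 : isprime 2) by exact prime_2. destruct (hg 2%nat H2). lra. }
  exists (Ssel g alpha). split.
  { intros r Hr. destruct r; [contradiction| exact (proj1 Hr)]. }
  intros eta Heta.
  set (F := Fs g alpha).
  set (delta := Rmin eta alpha / 2).
  assert (Hd : 0 < delta < alpha /\ delta < eta).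
  { unfold delta. pose proof (Rmin_l eta alpha). pose proof (Rmin_r eta alpha).
    assert (Rmin eta alpha > 0) by (apply Rmin_glb_lt; lra). lra. }
  set (eps := delta / alpha).
  assert (Heps : 0 < eps < 1).
  { unfold eps. split. apply Rdiv_lt_0_compat; lra.
    apply (Rmult_lt_reg_r alpha); auto. unfold Rdiv; rewrite Rmult_assoc, Rinv_l by lra. lra. }
  assert (Hae : alpha * eps = delta) by (unfold eps; field; lra).
  set (kap := (c - alpha) / 2).
  assert (Hk : 0 < kap) by (unfold kap; lra).
  destruct (hliminf eps Heps kap Hk) as [X HX].
  set (X0 := Rmax X 2).
  assert (HX0 : X <= X0 /\ 2 <= X0) by (split; [apply Rmax_l|apply Rmax_r]).
  set (L := ln X0).
  assert (HL : 0 < L) by (unfold L; rewrite <- ln_1; apply ln_increasing; lra).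
  assert (Hstep : forall t r, 0 < t -> L <= ln t -> delta <= r ->
     alpha * ln t - F (nfloor t) > r * ln t ->
     exists y, 0 < y /\ ln y = (1 - eps) * ln t /\
       alpha * ln y - F (nfloor y) > (r + kap * eps) * ln y).
  { intros t r Ht HLt Hr HD.
    assert (Ht0 : X0 <= t) by (apply ln_le_inv; auto; lra).
    set (y := Rpower t (1 - eps)).
    assert (Hy : 0 < y) by (unfold y, Rpower; apply exp_pos).
    assert (Hly : ln y = (1 - eps) * ln t) by (unfold y, Rpower; apply ln_exp).
    assert (Hyt : y <= t) by (apply ln_le_inv; auto; nra).
    exists y. split; auto. split; auto.
    specialize (HX t ltac:(lra)).
    set (s := psum (fun p => isprime p /\ Rpower t (1 - eps) < INR p) (term g) t) in HX.
    assert (Hs : (c - kap) * (eps * ln t) <= s).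
    { assert (0 < eps * ln t) by nra.
      apply (Rmult_le_compat_l (eps * ln t)) in HX; [|lra].
      rewrite <- Rmult_assoc, Rinv_r in HX by lra. lra. }
    assert (HFN : F (nfloor t) < alpha * ln y).
    { assert (delta * ln t <= r * ln t) by (apply Rmult_le_compat_r; lra).
      rewrite Hly. replace (alpha * ((1 - eps) * ln t)) with (alpha * ln t - (alpha * eps) * ln t) by ring. rewrite Hae. lra. }
    assert (Hsum : F (nfloor y) + s <= F (nfloor t)).
    { unfold s, psum, F. apply sum_lower; auto.
      - apply nfloor_mono; lra.
      - intros n Hn [_ Hlt]. fold y in Hlt. apply le_INR in Hn.
        pose proof (nfloor_le y ltac:(lra)). lra.
      - intros n Hn [Hp Hlt]. fold y in Hlt. destruct n. lia.
        change (isprime (S n) /\ Fs g alpha n < alpha * ln (INR (S n))). split; auto.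
        assert (H5 : Fs g alpha n <= Fs g alpha (nfloor t)) by (apply Fs_mono; auto; lia).
        pose proof (Rmult_lt_compat_l alpha _ _ ha (ln_increasing _ _ Hy Hlt)). fold F in H5 |- *. lra. }
    assert (0 <= ln y) by nra.
    assert ((r + kap * eps) * ln y <= (r + kap * eps) * ln t) by (apply Rmult_le_compat_l; nra).
    assert (Hc : c = alpha + 2 * kap) by (unfold kap; lra).
    assert (E : alpha * ln y + (c - kap) * (eps * ln t) = alpha * ln t + kap * eps * ln t)
      by (rewrite Hly, Hc; ring).
    assert (E2 : (r + kap * eps) * ln t = r * ln t + kap * eps * ln t) by ring.
    lra. }
  assert (Hiter : forall k t r, 0 < t -> L <= (1 - eps) ^ k * ln t -> delta <= r ->
     alpha <= r + INR k * (kap * eps) -> alpha * ln t - F (nfloor t) > r * ln t -> False).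
  { induction k; intros t r Ht HL' Hr Ha HD.
    - simpl in HL', Ha. assert (0 <= F (nfloor t)) by (apply Fs_nonneg; auto). nra.
    - pose proof (pow_le1 (1 - eps) (S k) ltac:(lra)).
      assert (HLt : L <= ln t).
      { destruct (Rle_lt_dec (ln t) 0). nra. nra. }
      destruct (Hstep t r Ht HLt Hr HD) as [y [Hy [Hly HDy]]].
      apply (IHk y (r + kap * eps)); auto.
      + rewrite Hly. simpl in HL'. nra.
      + nra.
      + rewrite S_INR in Ha. nra. }
  set (K := (nfloor (alpha / (kap * eps)) + 1)%nat).
  assert (HK : alpha <= delta + INR K * (kap * eps)).
  { assert (0 < kap * eps) by nra.
    assert (0 <= alpha / (kap * eps)) by (left; apply Rdiv_lt_0_compat; lra).
    pose proof (nfloor_gt _ H0). unfold K. rewrite plus_INR. simpl INR.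
    assert (alpha <= INR (nfloor (alpha / (kap * eps)) + 1) * (kap * eps)).
    { apply (Rmult_le_reg_r (/ (kap * eps))). apply Rinv_0_lt_compat; lra.
      rewrite Rmult_assoc, Rinv_r by lra. rewrite plus_INR. simpl INR. unfold Rdiv in H1. lra. }
    rewrite plus_INR in H2. simpl INR in H2. lra. }
  pose proof (pow_le1 (1 - eps) K ltac:(lra)) as HpK.
  assert (HpK0 : 0 < (1 - eps) ^ K) by (apply pow_lt; lra).
  set (X1 := exp (L / (1 - eps) ^ K)).
  set (X2 := exp (beta / eta + 1)).
  exists (Rmax X1 X2). intros x Hx.
  assert (Hx1 : X1 <= x) by (pose proof (Rmax_l X1 X2); lra).
  assert (Hx2 : X2 <= x) by (pose proof (Rmax_r X1 X2); lra).
  assert (Hxp : 0 < x) by (pose proof (exp_pos (L / (1 - eps) ^ K)); unfold X1 in Hx1; lra).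
  assert (Hlx1 : L / (1 - eps) ^ K <= ln x) by (rewrite <- (ln_exp (L / _)); apply my_ln_le; auto; apply exp_pos).
  assert (Hlx2 : beta / eta + 1 <= ln x) by (rewrite <- (ln_exp (beta / eta + 1)); apply my_ln_le; auto; apply exp_pos).
  assert (Hbe : 0 <= beta / eta) by (apply Rmult_le_pos; auto; left; apply Rinv_0_lt_compat; lra).
  set (lx := ln x) in *.
  assert (Hlx : 0 < lx) by lra.
  assert (Hlow : alpha * lx - F (nfloor x) <= delta * lx).
  { apply Rnot_lt_le. intros HD. apply (Hiter K x delta); auto; try lra.
    assert (EL : L = (1 - eps) ^ K * (L / (1 - eps) ^ K)) by (field; lra).
    rewrite EL at 1. apply Rmult_le_compat_l; [lra | exact Hlx1]. }
  assert (HN1 : (1 <= nfloor x)%nat).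
  { apply nfloor_ge. lra. simpl. assert (1 <= x); [|lra].
    apply ln_le_inv; [lra| |lra]. change (ln 1 <= lx). rewrite ln_1; lra. }
  assert (Hup : F (nfloor x) <= alpha * lx + beta).
  { pose proof (Fs_upper g alpha beta ha hb hg _ HN1).
    assert (ln (INR (nfloor x)) <= lx).
    { apply my_ln_le. apply lt_0_INR; lia. apply nfloor_le; lra. }
    fold F in H. nra. }
  assert (Hbe2 : beta < eta * lx).
  { assert (beta = eta * (beta / eta)) by (field; lra). nra. }
  rewrite psum_Fs. fold F.
  set (q := / lx * F (nfloor x)).
  assert (Hq : F (nfloor x) = q * lx) by (unfold q; field; lra).
  rewrite Hq in Hup, Hlow.
  apply Rabs_def1.
  - assert ((q - alpha) * lx < eta * lx) by nra.
    apply Rmult_lt_reg_r in H; auto.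
  - assert ((alpha - q) * lx < eta * lx) by nra.
    apply Rmult_lt_reg_r in H; auto. lra.
Qed.
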